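(* Let $\mathcal V$ be a finite set, let $P_h$ and $\pi$ be probability distributions on $\mathcal V$, and set $q := 1-\max_{x\in\mathcal V}P_h(x)$. Then: (i) For every subset $A\subseteq\mathcal V$, $$\pi(A)-P_h(A)\;\le\;\sup\Bigl\{\lambda\in[0,1]:\ d_{\mathrm{kl}}(\lambda\,\|\,q)\le D_{\mathrm{KL}}(\pi\,\|\,P_h)\Bigr\}.$$ (ii) For every fixed $C\ge 0$, $$\lim_{q\to 0}\ \sup_{\pi:\,D_{\mathrm{KL}}(\pi\|P_h)\le C}\ \sup_{A\subseteq\mathcal V}\bigl(\pi(A)-P_h(A)\bigr)=0,$$ in the uniform sense: for every $\varepsilon>0$ there is $\eta>0$ such that for every distribution $P_h$ on $\mathcal V$ with $1-\max_{x}P_h(x)<\eta$, every distribution $\pi$ on $\mathcal V$ with $D_{\mathrm{KL}}(\pi\|P_h)\le C$, and every $A\subseteq\mathcal V$, one has $\pi(A)-P_h(A)\le\varepsilon$.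
   Context: For distributions on a finite set, $\pi(A)=\sum_{x\in A}\pi(x)$ and $D_{\mathrm{KL}}(\pi\|P_h)=\sum_x \pi(x)\log\frac{\pi(x)}{P_h(x)}\in[0,+\infty]$. The binary KL divergence is $d_{\mathrm{kl}}(p\|q):=p\log\frac{p}{q}+(1-p)\log\frac{1-p}{1-q}$ for $p,q\in[0,1]$, with the conventions $0\log(0/q):=0$ for $q\in[0,1]$ (including $0\log(0/0)=0$) and $b\log(b/0):=+\infty$ for $b>0$. (In the paper, $P_h=P_h(\cdot\mid h_t)$ is a human-like next-token distribution given a history $h_t$, $\pi=\pi_\theta(\cdot\mid h_t)$ is a policy's next-token distribution, and $q$ is called the local capacity mass.) *)

(* Defs.v *)
From HB Require Import structures.
From mathcomp Require Import all_boot all_order all_algebra.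
From mathcomp Require Import all_classical all_reals all_analysis.
Set Implicit Arguments. Unset Strict Implicit. Unset Printing Implicit Defensive.
Import Order.TTheory GRing.Theory Num.Theory.
Local Open Scope ring_scope.

Section Defs.
Variables (R : realType).

Definition is_dist (V : finType) (p : V -> R) : Prop :=
  (forall x, 0 <= p x) /\ \sum_(x : V) p x = 1.

Definition massof (V : finType) (p : V -> R) (A : {set V}) : R :=
  \sum_(x in A) p x.

(* max_x P(x) (P nonnegative, so 0 is a neutral start) *)
Definition pmax (V : finType) (p : V -> R) : R :=
  \big[Num.max/0]_(x : V) p x.

Definition xlogxy (a b : R) : \bar R :=
  if a == 0 then 0%E
  else if b == 0 then +oo%E
  else (a * ln (a / b))%:E.

Definition dkl (p q : R) : \bar R :=
  (xlogxy p q + xlogxy (1 - p) (1 - q))%E.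

Definition KL (V : finType) (pi P : V -> R) : \bar R :=
  (\sum_(x : V) xlogxy (pi x) (P x))%E.

End Defs.

(* Main.v *)
Require Import Defs.
From HB Require Import structures.
From mathcomp Require Import all_boot all_order all_algebra.
From mathcomp Require Import all_classical all_reals all_analysis.
From mathcomp Require Import ring lra.
Import Order.TTheory GRing.Theory Num.Theory.
Local Open Scope ring_scope.

Section S.
Variable R : realType.

Lemma key (u v c : R) : 0 < u -> 0 < v -> 0 < c ->
  u * ln c + u - v * c <= u * ln (u / v).
Proof.
move=> u0 v0 c0.
have h : ln (v * c / u) <= v * c / u - 1.
  have := @le_ln1Dx R (v * c / u - 1).
  have -> : 1 + (v * c / u - 1) = v * c / u by ring.
  apply; have : 0 < v * c / u by rewrite divr_gt0 // mulr_gt0.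
  lra.
have e : ln (v * c / u) = ln c - ln (u / v).
  rewrite -ln_div ?posrE ?divr_gt0 //; congr ln; field.
  by apply/andP; split; apply/lt0r_neq0.
rewrite e in h.
have : u * (ln c - ln (u / v)) <= u * (v * c / u - 1) by rewrite ler_pM2l.
have -> : u * (v * c / u - 1) = v * c - u.
  by field; apply/lt0r_neq0.
lra.
Qed.

Definition xlr (a b : R) : R := if a == 0 then 0 else a * ln (a / b).

Lemma xlogxyE (a b : R) : 0 <= a -> (0 < a -> 0 < b) -> xlogxy a b = (xlr a b)%:E.
Proof.
rewrite /xlogxy /xlr => a0 ab; case: eqP => // /eqP an0.
have : 0 < b by apply: ab; rewrite lt0r an0.
by move=> /lt0r_neq0 /negbTE ->.
Qed.

Lemma xlogxy_neqNy (a b : R) : xlogxy a b != -oo%E.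
Proof. by rewrite /xlogxy; case: ifP => //; case: ifP. Qed.

Variable V : finType.

Definition xl (pi P : V -> R) x := xlr (pi x) (P x).

Definition finKL (pi P : V -> R) := forall x, 0 < pi x -> 0 < P x.

Lemma KL_fin (pi P : V -> R) : (forall x, 0 <= pi x) -> finKL pi P ->
  KL pi P = (\sum_x xl pi P x)%:E.
Proof.
move=> pi0 f; rewrite /KL -sumEFin; apply: eq_bigr => x _.
by apply: xlogxyE; [exact: pi0 | exact: f].
Qed.

Lemma KL_inf (pi P : V -> R) : (forall x, 0 <= P x) -> ~ finKL pi P ->
  KL pi P = +oo%E.
Proof.
move=> P0 nf.
have [x [pix Px]] : exists x, 0 < pi x /\ P x = 0.
  apply: contrapT => hn; apply: nf => x pix.
  rewrite lt0r P0 andbT; apply/eqP => Px; apply: hn; by exists x.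
apply/esum_eqyP => [i _|]; first exact: xlogxy_neqNy.
exists x; split => //.
by rewrite /xlogxy (negbTE (lt0r_neq0 pix)) Px eqxx.
Qed.

Lemma pointwise (p P c : R) : 0 <= p -> 0 <= P -> (0 < p -> 0 < P) -> 0 < c ->
  p * ln c + p - P * c <= xlr p P.
Proof.
move=> p0 P0 pP c0; rewrite /xlr; case: eqP => [->|/eqP pn0].
  rewrite mul0r !add0r oppr_le0; exact: mulr_ge0 P0 (ltW c0).
have pp : 0 < p by rewrite lt0r pn0.
by apply: key => //; apply: pP.
Qed.

Lemma R1 (pi P w : V -> R) : (forall x, 0 <= pi x) -> (forall x, 0 <= P x) ->
  finKL pi P -> (forall x, 0 <= w x) ->
  (0 < \sum_x w x * pi x -> 0 < \sum_x w x * P x) /\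
  xlr (\sum_x w x * pi x) (\sum_x w x * P x) <= \sum_x w x * xl pi P x.
Proof.
move=> pi0 P0 f w0.
set a := \sum_x w x * pi x; set b := \sum_x w x * P x.
have a0 : 0 <= a by apply: sumr_ge0 => x _; apply: mulr_ge0.
have b0 : 0 <= b by apply: sumr_ge0 => x _; apply: mulr_ge0.
have ab : 0 < a -> 0 < b.
  move=> apos; rewrite lt0r b0 andbT; apply/eqP => bz.
  have h := psumr_eq0P (fun x _ => mulr_ge0 (w0 x) (P0 x)) bz.
  suff : a = 0 by move=> az; rewrite az ltxx in apos.
  apply: big1 => x _.
  have [wz|wn] := eqVneq (w x) 0; first by rewrite wz mul0r.
  have [pz|pn] := eqVneq (pi x) 0; first by rewrite pz mulr0.
  have pp : 0 < pi x by rewrite lt0r pn pi0.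
  have wp : 0 < w x by rewrite lt0r wn w0.
  have := mulr_gt0 wp (f x pp); rewrite h // ltxx //.
split => //.
have [az|an] := eqVneq a 0.
  rewrite /xlr az eqxx.
  have h := psumr_eq0P (fun x _ => mulr_ge0 (w0 x) (pi0 x)) az.
  rewrite big1 // => x _.
  have /eqP := h x isT; rewrite mulf_eq0 => /orP[/eqP ->|/eqP pz]; first by rewrite mul0r.
  by rewrite /xl /xlr pz eqxx mulr0.
have apos : 0 < a by rewrite lt0r an a0.
have bpos := ab apos.
have cpos : 0 < a / b by rewrite divr_gt0.
rewrite /xlr (negbTE an).
have E : \sum_x w x * (pi x * ln (a / b) + pi x - P x * (a / b)) = a * ln (a / b).
  rewrite (eq_bigr (fun x => (w x * pi x) * ln (a / b) + w x * pi x - (w x * P x) * (a / b))); last by move=> x _; ring.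
  rewrite sumrB big_split /= -!mulr_suml -/a -/b.
  have -> : b * (a / b) = a by field; apply/lt0r_neq0.
  ring.
rewrite -E; apply: ler_sum => x _; apply: ler_wpM2l => //.
by apply: pointwise => //; apply: f.
Qed.

Lemma compl_sum (pi w : V -> R) : \sum_x pi x = 1 ->
  \sum_x (1 - w x) * pi x = 1 - \sum_x w x * pi x.
Proof.
move=> s1; rewrite (eq_bigr (fun x => pi x - w x * pi x)); last by move=> x _; ring.
by rewrite sumrB s1.
Qed.

Lemma DPr (pi P w : V -> R) : is_dist pi -> is_dist P -> finKL pi P ->
  (forall x, 0 <= w x <= 1) ->
  let a := \sum_x w x * pi x in let b := \sum_x w x * P x in
  [/\ 0 <= a, 0 <= 1 - a, (0 < a -> 0 < b), (0 < 1 - a -> 0 < 1 - b) &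
  xlr a b + xlr (1 - a) (1 - b) <= \sum_x xl pi P x].
Proof.
move=> [pi0 spi] [P0 sP] f w01 a b.
have w0 : forall x, 0 <= w x by move=> x; case/andP: (w01 x).
have w1 : forall x, 0 <= 1 - w x by move=> x; case/andP: (w01 x) => _; rewrite subr_ge0.
have [h1 h2] := R1 _ _ _ pi0 P0 f w0.
have [h3 h4] := R1 _ _ _ pi0 P0 f w1.
rewrite (compl_sum pi w spi) (compl_sum P w sP) in h3 h4.
split => //.
- by apply: sumr_ge0 => x _; apply: mulr_ge0.
- by rewrite -compl_sum //; apply: sumr_ge0 => x _; apply: mulr_ge0.
have -> : \sum_x xl pi P x = \sum_x w x * xl pi P x + \sum_x (1 - w x) * xl pi P x.
  by rewrite -big_split; apply: eq_bigr => x _ /=; ring.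
exact: lerD.
Qed.

Lemma DP (pi P w : V -> R) : is_dist pi -> is_dist P ->
  (forall x, 0 <= w x <= 1) ->
  (dkl (\sum_x w x * pi x) (\sum_x w x * P x) <= KL pi P)%E.
Proof.
move=> dpi dP w01.
have [f|nf] := pselect (finKL pi P); last by rewrite KL_inf //; [exact: leey | case: dP].
have [a0 a1 h1 h2 h] := DPr _ _ _ dpi dP f w01.
rewrite KL_fin //; last by case: dpi.
by rewrite /dkl !xlogxyE // -EFinD lee_fin.
Qed.

Lemma mass_split (f : V -> R) (A : {set V}) :
  \sum_x f x = massof f A + \sum_(x | x \notin A) f x.
Proof. by rewrite (bigID (mem A)). Qed.

Lemma sum_if (t u : R) (f : V -> R) (A : {set V}) :
  \sum_x (if x \in A then t else u) * f x =
  t * massof f A + u * \sum_(x | x \notin A) f x.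
Proof.
rewrite (bigID (mem A)) /= /massof !mulr_sumr; congr (_ + _).
  by apply: eq_bigr => x ->.
by apply: eq_bigr => x /negbTE ->.
Qed.

Lemma single_le (f : V -> R) (Q : pred V) x : (forall y, 0 <= f y) -> Q x ->
  f x <= \sum_(i | Q i) f i.
Proof.
move=> f0 Qx; rewrite (bigD1 x) //= lerDl; apply: sumr_ge0 => i _; exact: f0.
Qed.

Lemma pmax_ge0 (P : V -> R) : 0 <= pmax P.
Proof. by rewrite /pmax bigmax_idl le_max lexx. Qed.

Lemma pmax_le1 (P : V -> R) : is_dist P -> pmax P <= 1.
Proof.
move=> [P0 sP]; apply: bigmax_le => // x _; rewrite -sP.
by apply: (single_le P predT x).
Qed.

Lemma pmax_split (P : V -> R) (A : {set V}) : is_dist P ->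
  pmax P <= massof P A \/ pmax P <= 1 - massof P A.
Proof.
move=> [P0 sP].
have E : \sum_(x | x \notin A) P x = 1 - massof P A by rewrite -sP (mass_split P A); ring.
have b0 : 0 <= massof P A by apply: sumr_ge0.
have c0 : 0 <= 1 - massof P A by rewrite -E; apply: sumr_ge0.
have H : forall x, P x <= massof P A \/ P x <= 1 - massof P A.
  move=> x; case: (boolP (x \in A)) => xA; [left | right].
    by apply: (single_le P (mem A) x).
  by rewrite -E; apply: (single_le P (fun y => y \notin A) x).
have [bc|cb] := leP (massof P A) (1 - massof P A).
  right; apply: bigmax_le => // x _; case: (H x) => h //; exact: le_trans h bc.
left; apply: bigmax_le => // x _; case: (H x) => h //; exact: le_trans h (ltW cb).
Qed.

Lemma channel (pi P : V -> R) (A : {set V}) : is_dist pi -> is_dist P ->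
  1 - pmax P < massof pi A - massof P A ->
  exists w : V -> R, [/\ (forall x, 0 <= w x <= 1),
    \sum_x w x * pi x = massof pi A - massof P A &
    \sum_x w x * P x = 1 - pmax P].
Proof.
move=> dpi dP.
set a := massof pi A; set b := massof P A; set q := 1 - pmax P => lt.
have [pi0 spi] := dpi; have [P0 sP] := dP.
have Ea : \sum_(x | x \notin A) pi x = 1 - a by rewrite -spi (mass_split pi A) /a; ring.
have Eb : \sum_(x | x \notin A) P x = 1 - b by rewrite -sP (mass_split P A) /b; ring.
have b0 : 0 <= b by apply: sumr_ge0.
have a1 : 0 <= 1 - a by rewrite -Ea; apply: sumr_ge0.
have q0 : 0 <= q by rewrite /q subr_ge0 pmax_le1.
have bq : b <= q.
  case: (pmax_split P A dP) => h; last by rewrite /q /b; lra.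
  exfalso; move: lt a1; rewrite /q /a /b; lra.
set lam := a - b.
have lpos : 0 < lam by exact: le_lt_trans q0 lt.
set d := (lam - q) / lam.
have hd : d * lam = lam - q by rewrite /d; field; apply/lt0r_neq0.
have d0 : 0 <= d by rewrite /d; apply: divr_ge0; [rewrite subr_ge0; exact: ltW lt | exact: ltW].
have d1 : d <= 1 by rewrite /d ler_pdivrMr // mul1r lerBlDr lerDl.
set u := q - b * d.
have u0 : 0 <= u.
  rewrite /u subr_ge0; apply: le_trans bq; rewrite -[leRHS]mulr1.
  by apply: ler_wpM2l.
have t1 : u + d <= 1.
  rewrite -(ler_pM2l lpos) mulr1.
  have -> : lam * (u + d) = lam * q - b * (d * lam) + d * lam by rewrite /u; ring.
  rewrite hd.
  have h1 : 0 <= q * (1 - lam) by apply: mulr_ge0 => //; rewrite /lam; lra.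
  have h2 : 0 <= b * (lam - q) by apply: mulr_ge0 => //; rewrite subr_ge0 ltW.
  nra.
exists (fun x => if x \in A then u + d else u); split.
- move=> x; case: ifP => _; apply/andP; split => //; [exact: addr_ge0 | lra].
- rewrite sum_if Ea -/a /lam; rewrite /lam in hd; rewrite /u.
  have : d * (a - b) = a - b - q by exact: hd.
  nra.
- by rewrite sum_if Eb -/b /u; ring.
Qed.

Lemma mass_bounds (f : V -> R) (A : {set V}) : is_dist f ->
  0 <= massof f A /\ massof f A <= 1.
Proof.
move=> [f0 sf]; split; first by apply: sumr_ge0.
have := mass_split f A; rewrite sf => ->; rewrite lerDl; exact: sumr_ge0.
Qed.
End S.

Local Open Scope classical_set_scope.

Theorem theorem1 (R : realType) (V : finType) :
  (forall (P pi : V -> R) (A : {set V}),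
     is_dist P -> is_dist pi ->
     massof pi A - massof P A <=
       sup [set l : R | 0 <= l <= 1 /\
                        (dkl l (1 - pmax P) <= KL pi P)%E])
  /\
  (forall C : R, 0 <= C ->
   forall eps : R, 0 < eps ->
   exists eta : R, 0 < eta /\
     forall (P pi : V -> R) (A : {set V}),
       is_dist P -> is_dist pi ->
       1 - pmax P < eta ->
       (KL pi P <= C%:E)%E ->
       massof pi A - massof P A <= eps).
Proof.
split.
  move=> P pi A dP dpi.
  set S := [set l : R | _].
  have hub : has_ubound S by exists 1 => l [/andP [_ l1] _].
  suff [l [Sl ll]] : exists l, S l /\ massof pi A - massof P A <= l.
    exact: le_trans ll (ub_le_sup hub Sl).
  have q0 : 0 <= 1 - pmax P by rewrite subr_ge0 pmax_le1.
  have q1 : 1 - pmax P <= 1 by rewrite lerBlDr lerDl pmax_ge0.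
  have [pi0 spi] := dpi; have [P0 sP] := dP.
  case: (leP (massof pi A - massof P A) (1 - pmax P)) => h.
    exists (1 - pmax P); split => //; split; first by apply/andP.
    have := DP _ _ pi P (fun _ => 1 - pmax P) dpi dP (fun _ => introT andP (conj q0 q1)).
    by rewrite -!mulr_sumr spi sP !mulr1.
  have [w [w01 sw1 sw2]] := channel _ _ _ _ A dpi dP h.
  exists (massof pi A - massof P A); split => //; split.
    apply/andP; split; first exact: le_trans q0 (ltW h).
    have := mass_bounds _ _ _ A dpi; have := mass_bounds _ _ _ A dP; lra.
  by rewrite -sw1 -sw2; apply: DP.
move=> C C0 eps eps0.
set M := (C + 2) / eps.
have M0 : 0 <= M by rewrite /M divr_ge0 // ?(ltW eps0) //; lra.
exists (Num.min eps (expR (- M))); split; first by rewrite lt_min eps0 expR_gt0.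
move=> P pi A dP dpi; rewrite lt_min => /andP [qe qM] hKL.
case: (leP (massof pi A - massof P A) (1 - pmax P)) => h.
  exact: ltW (le_lt_trans h qe).
have [w [w01 sw1 sw2]] := channel _ _ _ _ A dpi dP h.
have f : finKL R V pi P.
  apply: contrapT => nf; move: hKL; rewrite KL_inf //; last by case: dP.
have [a0 a1 h1 h2 hh] := DPr _ _ _ _ _ dpi dP f w01.
rewrite sw1 sw2 in a0 a1 h1 h2 hh.
move: hKL; rewrite KL_fin //; last by case: dpi.
rewrite lee_fin => hC.
set lam := massof pi A - massof P A; set q := 1 - pmax P.
rewrite -/lam -/q in a0 a1 h1 h2 hh h.
have q0 : 0 <= q by rewrite /q subr_ge0 pmax_le1.
rewrite leNgt; apply/negP => el.
have lpos : 0 < lam by exact: lt_trans eps0 el.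
have qpos := h1 lpos.
have E1 : xlr R lam q = lam * ln lam - lam * ln q.
  rewrite /xlr (negbTE (lt0r_neq0 lpos)) ln_div ?posrE //; ring.
have k1 := key _ lam 1 1 lpos ltr01 ltr01.
rewrite ln1 divr1 mulr0 add0r mulr1 in k1.
have k2 : q - lam <= xlr R (1 - lam) (1 - q).
  rewrite /xlr; case: eqP => [_|/eqP ln0]; first by lra.
  have lp : 0 < 1 - lam by rewrite lt0r ln0 a1.
  have := key _ (1 - lam) (1 - q) 1 lp (h2 lp) ltr01.
  rewrite ln1 mulr0 add0r mulr1; lra.
have lq : ln q < - M.
  by rewrite -[X in _ < X]expRK ltr_ln ?posrE ?expR_gt0.
have lq0 : 0 <= - ln q by lra.
have m1 : eps * (- ln q) <= lam * (- ln q) by apply: ler_wpM2r => //; exact: ltW.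
have m2 : eps * M < eps * (- ln q) by rewrite ltr_pM2l //; lra.
have m3 : eps * M = C + 2 by rewrite /M; field; apply/lt0r_neq0.
lra.
Qed.
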